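(* The Taylor coefficients of $\log\mathbb{E}[z^V]=\sum_{k\ge0}q_kz^k$ around $z=0$ are $$q_0=-\frac{\theta}{\gamma}\,{}_2F_1(1,\gamma;1+\gamma;q),\qquad q_k=\theta\,\frac{(k-1)!}{(\gamma+1)_k}\,{}_2F_1(k,\gamma;1+\gamma+k;q)\quad(k\ge1).$$ Hence $\mathbb{P}(V=0)=e^{q_0}$ and $\mathbb{P}(V=n)=\frac1n\sum_{k=0}^{n-1}(n-k)q_{n-k}\mathbb{P}(V=k)$ for $n\ge1$.
   Context: Fix $\delta>0$ and $\alpha>\beta\ge0$, put $\lambda=\alpha-\beta$, $q=\beta/\alpha$, $\gamma=\delta/\lambda$, and fix $\theta>0$. Let $\xi(z)=\frac{q-z}{1-z}$. Let $V$ be a random variable on $\{0,1,\dots\}$ with $\log\mathbb{E}[z^V]=-\frac{\theta}{\gamma}{}_2F_1(1,\gamma;1+\gamma;\xi(z))$ for $z\in[0,1)$, where ${}_2F_1$ is the Gauss hypergeometric function and $(a)_k=\Gamma(a+k)/\Gamma(a)$ is the Pochhammer symbol. *)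

(* Defs.v *)
From Stdlib Require Import Reals Lra ClassicalEpsilon Arith Factorial.
Open Scope R_scope.

Fixpoint poch (a : R) (k : nat) : R :=
  match k with
  | O => 1
  | S k' => poch a k' * (a + INR k')
  end.

(* Value of a convergent real series (chosen classically; only used where
   the series converges, in which case it is the unique limit). *)
Definition series_sum (s : nat -> R) : R :=
  epsilon (inhabits 0) (fun l => infinite_sum s l).

Definition hyp2F1_term (a b c x : R) (n : nat) : R :=
  poch a n * poch b n / (poch c n * INR (fact n)) * x ^ n.

Definition hyp2F1 (a b c x : R) : R := series_sum (hyp2F1_term a b c x).

Definition xi (q z : R) : R := (q - z) / (1 - z).

Definition pgf (p : nat -> R) (z : R) : R := series_sum (fun n => p n * z ^ n).

Definition qcoef (theta gamma q : R) (k : nat) : R :=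
  match k with
  | O => - (theta / gamma) * hyp2F1 1 gamma (1 + gamma) q
  | S k' => theta * INR (fact k') / poch (gamma + 1) k
            * hyp2F1 (INR k) gamma (1 + gamma + INR k) q
  end.

(* Main.v *)
Require Import Defs.
From Stdlib Require Import Reals Lra Lia ClassicalEpsilon Classical.
From Coquelicot Require Import Coquelicot.
Open Scope R_scope.

Lemma is_series_plusR (a b : nat -> R) (la lb : R) :
  is_series a la -> is_series b lb -> is_series (fun n => a n + b n) (la + lb).
Proof. intros; exact (is_series_plus a b la lb H H0). Qed.
Lemma is_series_scalR (c : R) (a : nat -> R) (l : R) :
  is_series a l -> is_series (fun n => c * a n) (c * l).
Proof. intros; exact (is_series_scal c a l H). Qed.
Lemma is_series_incr_1R (a : nat -> R) (l : R) :
  is_series a l -> is_series (fun k => a (S k)) (l - a O).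
Proof. intros; apply is_series_incr_1. 
  unfold plus; simpl. replace (l - a O + a O) with l by ring. exact H. Qed.

Lemma series_sum_eq s l : infinite_sum s l -> series_sum s = l.
Proof.
  intro H. unfold series_sum.
  assert (E : exists l, infinite_sum s l) by (exists l; auto).
  pose proof (epsilon_spec (inhabits 0) _ E) as H2.
  eapply uniqueness_sum; eauto.
Qed.

Lemma poch_add a n m : poch a (n + m) = poch a n * poch (a + INR n) m.
Proof.
  induction m.
  - rewrite Nat.add_0_r; simpl; ring.
  - rewrite Nat.add_succ_r; simpl. rewrite IHm, plus_INR; ring.
Qed.

Lemma poch_S a n : poch a (S n) = a * poch (a + 1) n.
Proof.
  change (S n) with (1 + n)%nat. rewrite poch_add. simpl. f_equal; ring.
Qed.

Lemma poch_pos a n : 0 < a -> 0 < poch a n.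
Proof.
  intro Ha; induction n; simpl. lra.
  apply Rmult_lt_0_compat; auto. pose proof (pos_INR n); lra.
Qed.

Lemma poch_le a b n : 0 < a -> a <= b -> poch a n <= poch b n.
Proof.
  intros Ha Hb; induction n; simpl. lra.
  pose proof (pos_INR n). pose proof (poch_pos a n Ha).
  apply Rmult_le_compat; lra.
Qed.

Lemma poch_1 n : poch 1 n = INR (Factorial.fact n).
Proof.
  induction n. reflexivity.
  change (poch 1 (S n)) with (poch 1 n * (1 + INR n)).
  change (Factorial.fact (S n)) with (S n * Factorial.fact n)%nat.
  rewrite IHn, mult_INR, S_INR. ring.
Qed.

Lemma fact_poch K m : INR (Factorial.fact (K + m)) = INR (Factorial.fact K) * poch (1 + INR K) m.
Proof. rewrite <- !poch_1, poch_add. reflexivity. Qed.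

Lemma radius_ge1 (a : nat -> R) M : (forall n, Rabs (a n) <= M) -> Rbar_le 1 (CV_radius a).
Proof.
  intro H. destruct (CV_radius_bounded a) as [H1 _].
  apply H1. exists M. intro n. rewrite pow1, Rmult_1_r. auto.
Qed.

Lemma in_radius (a : nat -> R) M x : (forall n, Rabs (a n) <= M) -> Rabs x < 1 ->
  Rbar_lt (Rabs x) (CV_radius a).
Proof.
  intros H Hx. pose proof (radius_ge1 a M H).
  destruct (CV_radius a); simpl in *; auto; lra.
Qed.

Lemma pseries_is (a : nat -> R) x : Rbar_lt (Rabs x) (CV_radius a) ->
  is_series (fun n => a n * x ^ n) (PSeries a x).
Proof.
  intro H. apply is_pseries_R. apply PSeries_correct. apply CV_radius_inside; auto.
Qed.

Definition uc (g : R) (n : nat) : R := g / (g + INR n).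

Lemma uc_bound g n : 0 < g -> Rabs (uc g n) <= 1.
Proof.
  intro Hg. unfold uc. pose proof (pos_INR n).
  rewrite Rabs_pos_eq. apply Rmult_le_reg_r with (g + INR n). lra.
  field_simplify; lra. apply Rlt_le, Rdiv_lt_0_compat; lra.
Qed.

Lemma poch_ratio g n : 0 < g -> poch g n / poch (1 + g) n = g / (g + INR n).
Proof.
  intro Hg. pose proof (poch_S g n) as E. simpl in E.
  pose proof (poch_pos (g+1) n ltac:(lra)). pose proof (pos_INR n).
  rewrite (Rplus_comm 1 g). field_simplify_eq; [|split; lra].
  rewrite <- Rmult_plus_distr_l, E. ring.
Qed.

Lemma hyp1_eq g x : 0 < g -> Rabs x < 1 -> hyp2F1 1 g (1 + g) x = PSeries (uc g) x.
Proof.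
  intros Hg Hx. unfold hyp2F1. apply series_sum_eq. apply is_series_Reals.
  eapply is_series_ext; [|apply pseries_is; eapply in_radius; [exact (fun n => uc_bound g n Hg) | auto]].
  intro n. simpl. unfold hyp2F1_term. rewrite poch_1.
  pose proof (INR_fact_neq_0 n). pose proof (poch_pos (1+g) n ltac:(lra)).
  unfold uc. rewrite <- (poch_ratio g n Hg). field. split; lra.
Qed.

Definition ck (g : R) (K m : nat) : R :=
  INR (Factorial.fact (K + m)) / (INR (Factorial.fact m) * poch (g + INR m) (S (S K))).

Definition Qser (g q th : R) (k m : nat) : R :=
  match k with
  | O => - (th / g) * (uc g m * q ^ m)
  | S K => th * g * ck g K m * q ^ m
  end.

Lemma ck_pos g K m : 0 < g -> 0 < ck g K m.
Proof.
  intro Hg. unfold ck. pose proof (pos_INR m).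
  apply Rdiv_lt_0_compat. apply lt_0_INR, Factorial.lt_O_fact.
  apply Rmult_lt_0_compat. apply lt_0_INR, Factorial.lt_O_fact. apply poch_pos; lra.
Qed.

Lemma div_le1 a b : 0 < b -> a <= b -> a / b <= 1.
Proof. intros. apply Rmult_le_reg_r with b; auto. field_simplify; lra. Qed.

Lemma gck_le1 g K m : 0 < g -> g * ck g K m <= 1.
Proof.
  intro Hg. unfold ck. pose proof (pos_INR m).
  pose proof (poch_S (g + INR m) (S K)) as E1.
  pose proof (fact_poch m (S K)) as E2.
  pose proof (poch_le (1 + INR m) (g + INR m + 1) (S K) ltac:(lra) ltac:(lra)) as E3.
  assert (E4 : INR (Factorial.fact (K + m)) <= INR (Factorial.fact (m + S K)))
    by (apply le_INR, Factorial.fact_le; lia).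
  pose proof (poch_pos (1 + INR m) (S K) ltac:(lra)).
  pose proof (lt_0_INR _ (Factorial.lt_O_fact m)). pose proof (lt_0_INR _ (Factorial.lt_O_fact (K+m))).
  rewrite E1. set (P := poch (g + INR m + 1) (S K)) in *.
  set (P' := poch (1 + INR m) (S K)) in *.
  set (F := INR (Factorial.fact m)) in *.
  assert (0 < P) by lra.
  assert (HD : 0 < F * ((g + INR m) * P)) by (apply Rmult_lt_0_compat; auto; apply Rmult_lt_0_compat; lra).
  assert (HX : g * INR (Factorial.fact (K + m)) <= F * ((g + INR m) * P)).
  { apply Rle_trans with (g * (F * P')). apply Rmult_le_compat_l; lra.
    replace (F * ((g + INR m) * P)) with ((g + INR m) * (F * P)) by ring.
    apply Rmult_le_compat; [lra | apply Rmult_le_pos; lra | lra | apply Rmult_le_compat_l; lra]. }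
  replace (g * (INR (Factorial.fact (K + m)) / (F * ((g + INR m) * P)))) with (g * INR (Factorial.fact (K + m)) / (F * ((g + INR m) * P))) by (field; lra). apply div_le1; auto.
Qed.

Lemma Qser_bound g q th k m : 0 < g -> 0 <= q -> 0 < th ->
  Rabs (Qser g q th k m) <= th * (1 + / g) * q ^ m.
Proof.
  intros Hg Hq Ht. pose proof (pow_le q m Hq). assert (0 < /g) by (apply Rinv_0_lt_compat; auto).
  destruct k; simpl Qser.
  - pose proof (uc_bound g m Hg). rewrite !Rabs_mult, Rabs_Ropp, (Rabs_pos_eq (q^m)) by auto.
    rewrite (Rabs_pos_eq (th/g)) by (apply Rlt_le, Rdiv_lt_0_compat; auto).
    pose proof (Rabs_pos (uc g m)).
    apply Rle_trans with (th / g * q^m).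
    replace (th / g * q^m) with (th / g * (1 * q^m)) by ring.
    apply Rmult_le_compat_l. apply Rlt_le, Rdiv_lt_0_compat; auto.
    apply Rmult_le_compat_r; auto.
    unfold Rdiv. apply Rmult_le_compat_r; auto. nra.
  - pose proof (gck_le1 g k m Hg). pose proof (ck_pos g k m Hg).
    rewrite Rabs_pos_eq. 2: { apply Rmult_le_pos; auto. apply Rmult_le_pos; [|lra]. nra. }
    replace (th * g * ck g k m * q^m) with (th * (g * ck g k m) * q^m) by ring.
    apply Rmult_le_compat_r; auto. apply Rmult_le_compat_l; lra.
Qed.

Lemma geom_ex q C : 0 <= q < 1 -> ex_series (fun m => C * q ^ m).
Proof.
  intros Hq. exists (C * / (1 - q)). apply (is_series_scalR C (fun m => q^m)).
  apply is_series_geom. rewrite Rabs_pos_eq; lra.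
Qed.

Lemma Qser_ex g q th k : 0 < g -> 0 <= q < 1 -> 0 < th -> ex_series (Qser g q th k).
Proof.
  intros. apply (@ex_series_le R_AbsRing R_CompleteNormedModule _ (fun m => th * (1 + /g) * q ^ m)); [|apply geom_ex; auto].
  intro n. apply Qser_bound; lra.
Qed.

Lemma hypterm_eq g q th K m : 0 < g -> 0 < th ->
  hyp2F1_term (INR (S K)) g (1 + g + INR (S K)) q m =
  Qser g q th (S K) m * poch (g + 1) (S K) / (th * INR (Factorial.fact K)).
Proof.
  intros Hg Ht. unfold hyp2F1_term, Qser, ck. pose proof (pos_INR m). pose proof (pos_INR K).
  pose proof (fact_poch K m) as E1.
  pose proof (poch_add (g + 1) (S K) m) as E2.
  pose proof (poch_S g (S K + m)) as E3.
  pose proof (poch_add g m (S (S K))) as E4.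
  replace (m + S (S K))%nat with (S (S K + m)) in E4 by lia.
  rewrite E3 in E4.
  replace (1 + g + INR (S K)) with (g + 1 + INR (S K)) by ring.
  replace (INR (S K)) with (1 + INR K) at 1 by (rewrite S_INR; ring).
  rewrite E1.
  pose proof (poch_pos g m Hg). pose proof (poch_pos (g + INR m) (S (S K)) ltac:(lra)).
  pose proof (poch_pos (g+1) (S K) ltac:(lra)).
  pose proof (poch_pos (g+1+INR (S K)) m ltac:(pose proof (pos_INR (S K)); lra)).
  pose proof (INR_fact_neq_0 m). pose proof (INR_fact_neq_0 K).
  set (A := poch g m) in *. set (B := poch (g + INR m) (S (S K))) in *.
  set (C := poch (g + 1) (S K)) in *. set (D := poch (g + 1 + INR (S K)) m) in *.
  rewrite E2 in E4.
  replace A with (g * C * D / B) by (field_simplify_eq; [lra | lra]).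
  field. repeat split; lra.
Qed.

Lemma Qser_sum g q th k : 0 < g -> 0 <= q < 1 -> 0 < th ->
  is_series (Qser g q th k) (qcoef th g q k).
Proof.
  intros Hg Hq Ht. destruct k.
  - simpl qcoef. rewrite hyp1_eq by (auto; rewrite Rabs_pos_eq; lra).
    apply (is_series_scalR (- (th/g)) (fun m => uc g m * q ^ m)).
    apply pseries_is. eapply in_radius. exact (fun n => uc_bound g n Hg). rewrite Rabs_pos_eq; lra.
  - destruct (Qser_ex g q th (S k) Hg Hq Ht) as [l Hl].
    set (Fc := th * INR (Factorial.fact k) / poch (g + 1) (S k)).
    assert (HF : 0 < Fc).
    { unfold Fc. apply Rdiv_lt_0_compat. apply Rmult_lt_0_compat; auto.
      apply lt_0_INR, Factorial.lt_O_fact. apply poch_pos; lra. }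
    assert (Hh : hyp2F1 (INR (S k)) g (1 + g + INR (S k)) q = / Fc * l).
    { unfold hyp2F1. apply series_sum_eq, is_series_Reals.
      eapply is_series_ext; [|apply (is_series_scalR (/ Fc) _ _ Hl)].
      intro n. rewrite (hypterm_eq g q th) by auto. unfold Fc. match goal with |- ?a = ?b => change (@eq R a b) end.
      pose proof (poch_pos (g+1) (S k) ltac:(lra)). pose proof (INR_fact_neq_0 k).
      field. repeat split; lra. }
    unfold qcoef. fold Fc. rewrite Hh, <- Rmult_assoc, Rinv_r, Rmult_1_l by lra. auto.
Qed.

Lemma Qc_bound g q th k : 0 < g -> 0 <= q < 1 -> 0 < th ->
  Rabs (qcoef th g q k) <= th * (1 + / g) / (1 - q).
Proof.
  intros Hg Hq Ht. pose proof (Qser_sum g q th k Hg Hq Ht) as H.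
  rewrite <- (is_series_unique _ _ H).
  assert (Ha : ex_series (fun n => Rabs (Qser g q th k n))).
  { apply (@ex_series_le R_AbsRing R_CompleteNormedModule _ (fun m => th * (1 + /g) * q ^ m)); [|apply geom_ex; auto].
    intro n. unfold norm; simpl. rewrite Rabs_Rabsolu. apply Qser_bound; lra. }
  eapply Rle_trans. apply Series_Rabs; auto.
  assert (Hg2 : is_series (fun m => th * (1 + /g) * q ^ m) (th * (1 + / g) / (1 - q))).
  { apply (is_series_scalR (th * (1 + /g)) (fun m => q^m)). apply is_series_geom. rewrite Rabs_pos_eq; lra. }
  rewrite <- (is_series_unique _ _ Hg2). apply Series_le. intro n. split. apply Rabs_pos.
  apply Qser_bound; lra. eexists; eauto.
Qed.

Lemma ck_A g K m : 0 < g ->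
  ck g (S K) m * (g + INR m + INR K + 2) = (INR K + INR m + 1) * ck g K m.
Proof.
  intro Hg. unfold ck. pose proof (pos_INR m). pose proof (pos_INR K).
  replace (S K + m)%nat with (S (K + m)) by lia.
  change (Factorial.fact (S (K + m))) with (S (K + m) * Factorial.fact (K + m))%nat.
  change (poch (g + INR m) (S (S (S K)))) with
    (poch (g + INR m) (S (S K)) * (g + INR m + INR (S (S K)))).
  rewrite mult_INR, S_INR, plus_INR, !S_INR.
  pose proof (poch_pos (g + INR m) (S (S K)) ltac:(lra)). pose proof (INR_fact_neq_0 m).
  field. repeat split; lra.
Qed.

Lemma ck_C g K m : 0 < g ->
  ck g K (S m) * (INR m + 1) = (g + INR m) * ck g (S K) m.
Proof.
  intro Hg. unfold ck. pose proof (pos_INR m). pose proof (pos_INR K).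
  replace (K + S m)%nat with (S K + m)%nat by lia.
  change (Factorial.fact (S m)) with (S m * Factorial.fact m)%nat.
  rewrite (poch_S (g + INR m) (S (S K))).
  rewrite mult_INR, !S_INR.
  replace (g + (INR m + 1)) with (g + INR m + 1) by ring.
  pose proof (poch_pos (g + INR m + 1) (S (S K)) ltac:(lra)). pose proof (INR_fact_neq_0 m).
  field. repeat split; lra.
Qed.

Lemma is_series_zero_unique (a : nat -> R) (l : R) : (forall n, a n = 0) -> is_series a l -> l = 0.
Proof.
  intros H Hl. apply is_series_Reals in Hl. eapply uniqueness_sum; eauto.
  intros e He. exists O. intros n _. unfold R_dist.
  rewrite (sum_eq a (fun _ => 0)) by auto. rewrite sum_cte. rewrite Rmult_0_l, Rminus_0_r, Rabs_R0; auto.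
Qed.

Section Rec.
Variables (g q th : R).
Hypothesis (Hg : 0 < g) (Hq : 0 <= q < 1) (Ht : 0 < th).
Let Q := qcoef th g q.

Lemma rec_0 : q * INR 1 * Q 1 - g * (1 - q) * Q 0 = th.
Proof.
  pose proof (Qser_sum g q th 1 Hg Hq Ht) as H1.
  pose proof (Qser_sum g q th 0 Hg Hq Ht) as H0.
  pose proof (is_series_incr_1R _ _ H0) as H0s.
  pose proof (is_series_plusR _ _ _ _ (is_series_scalR q _ _ H1) (is_series_scalR (-g) _ _ H0s)) as S1.
  pose proof (is_series_plusR _ _ _ _ S1 (is_series_scalR (g * q) _ _ H0)) as S2.
  apply is_series_zero_unique in S2.
  - unfold Q. set (A := qcoef th g q 1) in *. set (B := qcoef th g q 0) in *.
    unfold Qser, uc in S2. cbn [pow INR] in S2. rewrite Rplus_0_r in S2.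
    replace (g / g * 1) with 1 in S2 by (field; lra). simpl INR.
    replace (- g * (B - - (th / g) * 1)) with (- g * B - th) in S2 by (field; lra). lra.
  - intro m. simpl Qser. unfold ck, uc. simpl poch. rewrite S_INR.
    replace (0 + m)%nat with m by lia. pose proof (pos_INR m).
    pose proof (INR_fact_neq_0 m). field. repeat split; lra.
Qed.

Lemma T_zero K m :
  q * INR (S (S K)) * Qser g q th (S (S K)) m + - (INR (S K) + g) * Qser g q th (S K) (S m)
  + - (q * (INR (S K) - g)) * Qser g q th (S K) m + INR K * Qser g q th K (S m) = 0.
Proof.
  pose proof (pos_INR m). pose proof (pos_INR K).
  pose proof (ck_A g K m Hg) as EA. pose proof (ck_C g K m Hg) as EC.
  destruct K.
  - simpl Qser. cbn [INR] in *. simpl pow.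
    set (X := ck g 0 m) in *. set (Y := ck g 1 m) in *. set (Z := ck g 0 (S m)) in *.
    replace Z with ((g + INR m) * Y / (INR m + 1)) by (field_simplify_eq; lra).
    replace Y with ((0 + INR m + 1) * X / (g + INR m + 0 + 2)) by (field_simplify_eq; lra).
    field. lra.
  - pose proof (ck_C g K m Hg) as EC'.
    unfold Qser. rewrite !S_INR in *. simpl pow.
    set (X := ck g (S K) m) in *. set (Y := ck g (S (S K)) m) in *.
    set (Z := ck g (S K) (S m)) in *. set (W := ck g K (S m)) in *.
    replace W with ((g + INR m) * X / (INR m + 1)) by (field_simplify_eq; lra).
    replace Z with ((g + INR m) * Y / (INR m + 1)) by (field_simplify_eq; lra).
    replace Y with ((INR K + 1 + INR m + 1) * X / (g + INR m + (INR K + 1) + 2)) by (field_simplify_eq; lra).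
    field. lra.
Qed.

Lemma rec_S K :
  q * INR (S (S K)) * Q (S (S K)) - (1 + q) * INR (S K) * Q (S K) + INR K * Q K
   - g * (1 - q) * Q (S K) = match K with O => - th | S _ => 0 end.
Proof.
  pose proof (Qser_sum g q th (S (S K)) Hg Hq Ht) as H2.
  pose proof (Qser_sum g q th (S K) Hg Hq Ht) as H1.
  pose proof (Qser_sum g q th K Hg Hq Ht) as H0.
  pose proof (is_series_incr_1R _ _ H1) as H1s.
  pose proof (is_series_incr_1R _ _ H0) as H0s.
  pose proof (is_series_plusR _ _ _ _ (is_series_scalR (q * INR (S (S K))) _ _ H2)
     (is_series_scalR (- (INR (S K) + g)) _ _ H1s)) as S1.
  pose proof (is_series_plusR _ _ _ _ S1 (is_series_scalR (- (q * (INR (S K) - g))) _ _ H1)) as S2.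
  pose proof (is_series_plusR _ _ _ _ S2 (is_series_scalR (INR K) _ _ H0s)) as S3.
  apply is_series_zero_unique in S3.
  2: { intro m. cbv beta. rewrite <- (T_zero K m). reflexivity. }
  unfold Q. pose proof (pos_INR K).
  set (A := qcoef th g q (S (S K))) in *. set (B := qcoef th g q (S K)) in *.
  set (C := qcoef th g q K) in *.
  destruct K.
  - simpl Qser in S3. unfold ck in S3. simpl in S3. cbn [INR] in *.
    replace (1 * (1 * (g + 0 + 0) * (g + 0 + 1))) with (g * (g + 1)) in S3 by ring.
    replace (th * g * (1 / (g * (g + 1))) * 1) with (th / (g + 1)) in S3 by (field; lra).
    apply Rminus_diag_uniq; match type of S3 with ?X = _ => transitivity X; [field; lra | exact S3] end.
  - pose proof (ck_A g K 0 Hg) as EA.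
    unfold Qser in S3. simpl pow in S3. rewrite !S_INR in *.
    set (X := ck g K 0) in *. set (Y := ck g (S K) 0) in *.
    simpl INR in EA. replace Y with ((INR K + 1) * X / (g + INR K + 2)) in S3 by (field_simplify_eq; lra).
    simpl INR in S3. apply Rminus_diag_uniq; match type of S3 with ?X = _ => transitivity X; [field; lra | exact S3] end.
Qed.
End Rec.

Lemma derive_cont f x l : is_derive f x l -> continuity_pt f x.
Proof.
  intro H. apply is_derive_Reals in H. apply derivable_continuous_pt. exists l. exact H.
Qed.

Lemma const_of_deriv f a b : (forall x, a < x < b -> is_derive f x 0) ->
  forall x y, a < x < b -> a < y < b -> f x = f y.
Proof.
  intros H x y Hx Hy.
  destruct (MVT_gen f x y (fun _ => 0)) as [c [_ Hc]].
  - intros t Ht. apply H. split.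
    + apply Rlt_le_trans with (Rmin x y); [|lra]. apply Rmin_glb_lt; lra.
    + apply Rle_lt_trans with (Rmax x y); [lra|]. apply Rmax_lub_lt; lra.
  - intros t Ht. eapply derive_cont. apply H. split.
    + apply Rlt_le_trans with (Rmin x y); [|lra]. apply Rmin_glb_lt; lra.
    + apply Rle_lt_trans with (Rmax x y); [lra|]. apply Rmax_lub_lt; lra.
  - lra.
Qed.

Lemma rbar_lt_of_le (r : Rbar) (e x : R) : Rbar_le e r -> Rabs x < e -> Rbar_lt (Rabs x) r.
Proof. intros H1 H2. destruct r; simpl in *; auto; lra. Qed.

Lemma coef0_unique (a b : nat -> R) eps : 0 < eps ->
  Rbar_le eps (CV_radius a) -> Rbar_le eps (CV_radius b) ->
  (forall x, 0 < x < eps -> PSeries a x = PSeries b x) -> a O = b O.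
Proof.
  intros He Ha Hb H.
  assert (Ca : continuity_pt (PSeries a) 0) by (apply PSeries_continuity; eapply rbar_lt_of_le; eauto; rewrite Rabs_R0; lra).
  assert (Cb : continuity_pt (PSeries b) 0) by (apply PSeries_continuity; eapply rbar_lt_of_le; eauto; rewrite Rabs_R0; lra).
  destruct (Req_dec (a O) (b O)) as [E|NE]; auto. exfalso.
  set (d := Rabs (a O - b O) / 2).
  assert (Hd : 0 < d) by (unfold d; apply Rdiv_lt_0_compat; [apply Rabs_pos_lt; lra | lra]).
  destruct (Ca d Hd) as [da [Hda Ha']]. destruct (Cb d Hd) as [db [Hdb Hb']].
  set (x := Rmin eps (Rmin da db) / 2).
  assert (Hm : 0 < Rmin eps (Rmin da db)) by (repeat apply Rmin_glb_lt; lra).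
  assert (Hx1 : 0 < x < eps) by (unfold x; split; [lra|]; pose proof (Rmin_l eps (Rmin da db)); lra).
  assert (Hx2 : Rabs x < da /\ Rabs x < db).
  { rewrite Rabs_pos_eq by lra. pose proof (Rmin_r eps (Rmin da db)).
    pose proof (Rmin_l da db). pose proof (Rmin_r da db). unfold x; split; lra. }
  specialize (Ha' x). specialize (Hb' x). simpl in Ha', Hb'.
  unfold R_dist in *. rewrite Rminus_0_r in *. rewrite !PSeries_0 in *.
  assert (DX : D_x no_cond 0 x) by (split; [constructor | lra]).
  assert (A1 : Rabs (PSeries a x - a O) < d) by (apply Ha'; split; [exact DX | tauto]).
  assert (A2 : Rabs (PSeries b x - b O) < d) by (apply Hb'; split; [exact DX | tauto]).
  rewrite H in A1 by auto.
  assert (Rabs (a O - b O) <= Rabs (PSeries b x - a O) + Rabs (PSeries b x - b O)).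
  { replace (a O - b O) with (-(PSeries b x - a O) + (PSeries b x - b O)) by ring.
    eapply Rle_trans. apply Rabs_triang. rewrite Rabs_Ropp. lra. }
  unfold d in *. lra.
Qed.

Lemma coef_unique n : forall (a b : nat -> R) eps, 0 < eps ->
  Rbar_le eps (CV_radius a) -> Rbar_le eps (CV_radius b) ->
  (forall x, 0 < x < eps -> PSeries a x = PSeries b x) -> a n = b n.
Proof.
  induction n; intros a b eps He Ha Hb H.
  - eapply coef0_unique; eauto.
  - change (PS_decr_1 a n = PS_decr_1 b n). apply IHn with eps; auto.
    rewrite CV_radius_decr_1; auto. rewrite CV_radius_decr_1; auto.
    intros x Hx. assert (E0 : a O = b O) by (eapply coef0_unique; eauto).
    assert (Hxa : Rbar_lt (Rabs x) (CV_radius a)) by (eapply rbar_lt_of_le; eauto; rewrite Rabs_pos_eq; lra).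
    assert (Hxb : Rbar_lt (Rabs x) (CV_radius b)) by (eapply rbar_lt_of_le; eauto; rewrite Rabs_pos_eq; lra).
    pose proof (H x Hx) as Hx'.
    rewrite (PSeries_decr_1 a x (CV_radius_inside _ _ Hxa)) in Hx'.
    rewrite (PSeries_decr_1 b x (CV_radius_inside _ _ Hxb)) in Hx'.
    rewrite E0 in Hx'. apply Rmult_eq_reg_l with x; lra.
Qed.

Lemma is_derive_minusR (f g : R -> R) x df dg : is_derive f x df -> is_derive g x dg ->
  is_derive (fun t => f t - g t) x (df - dg).
Proof. intros. exact (is_derive_minus f g x df dg H H0). Qed.
Lemma is_derive_multR (f g : R -> R) x df dg : is_derive f x df -> is_derive g x dg ->
  is_derive (fun t => f t * g t) x (df * g x + f x * dg).
Proof. intros. exact (is_derive_mult f g x df dg H H0 Rmult_comm). Qed.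
Lemma is_derive_compR (f g : R -> R) x df dg : is_derive f (g x) df -> is_derive g x dg ->
  is_derive (fun t => f (g t)) x (dg * df).
Proof. intros. exact (is_derive_comp f g x df dg H H0). Qed.

Lemma my_loc_interval (a b z : R) : a < z < b -> locally z (fun t => a < t /\ t < b).
Proof. intro H. apply (open_and _ _ (open_gt a) (open_lt b)). auto. Qed.

Lemma term_le_sum (f : nat -> R) N n : (forall k, 0 <= f k) -> (n <= N)%nat -> f n <= sum_f_R0 f N.
Proof.
  intros Hf. induction N; intro Hn.
  - assert (n = O) by lia. subst. simpl. lra.
  - simpl. destruct (Nat.eq_dec n (S N)).
    + subst. pose proof (cond_pos_sum f N Hf). lra.
    + pose proof (Hf (S N)). specialize (IHN ltac:(lia)). lra.
Qed.

Lemma pseries_ex_radius (a : nat -> R) r : ex_pseries a r -> Rbar_le (Rabs r) (CV_radius a).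
Proof.
  intro H. destruct (CV_radius_bounded a) as [H1 _]. apply H1.
  assert (Hs : ex_series (fun n => a n * r ^ n)).
  { destruct H as [l Hl]. exists l. apply is_pseries_R. exact Hl. }
  apply ex_series_lim_0, is_lim_seq_Reals in Hs.
  destruct (Hs 1 ltac:(lra)) as [N HN].
  exists (1 + sum_f_R0 (fun k => Rabs (a k * r ^ k)) N). intro n.
  replace (Rabs (a n * Rabs r ^ n)) with (Rabs (a n * r ^ n)) by (rewrite !Rabs_mult, <- !RPow_abs, Rabs_Rabsolu; reflexivity).
  assert (0 <= sum_f_R0 (fun k => Rabs (a k * r ^ k)) N).
  { apply cond_pos_sum. intro; apply Rabs_pos. }
  destruct (Compare_dec.le_lt_dec N n).
  - specialize (HN n ltac:(lia)). unfold R_dist in HN. rewrite Rminus_0_r in HN. lra.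
  - pose proof (term_le_sum (fun k => Rabs (a k * r ^ k)) N n (fun k => Rabs_pos _) ltac:(lia)). lra.
Qed.

Definition Phi (g q th : R) (z : R) : R := - (th / g) * PSeries (uc g) (xi q z).

Section Anal.
Variables (g q th : R).
Hypothesis (Hg : 0 < g) (Hq : 0 <= q < 1) (Ht : 0 < th).

Lemma rad_uc : Rbar_le 1 (CV_radius (uc g)).
Proof. apply radius_ge1 with 1. intro; apply uc_bound; auto. Qed.

Lemma rad_Qc : Rbar_le 1 (CV_radius (qcoef th g q)).
Proof. apply radius_ge1 with (th * (1 + / g) / (1 - q)). intro; apply Qc_bound; auto. Qed.

Lemma U_id x : Rabs x < 1 ->
  x * PSeries (PS_derive (uc g)) x + g * PSeries (uc g) x = g / (1 - x).
Proof.
  intro Hx.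
  assert (H1 : Rbar_lt (Rabs x) (CV_radius (uc g))) by (eapply rbar_lt_of_le; [apply rad_uc | auto]).
  assert (H2 : Rbar_lt (Rabs x) (CV_radius (PS_derive (uc g)))) by (rewrite CV_radius_derive; auto).
  pose proof (pseries_is _ _ H1) as SU. pose proof (pseries_is _ _ H2) as SD.
  apply is_pseries_R in SD. apply is_pseries_incr_1 in SD. apply is_pseries_R in SD.
  pose proof (is_series_plusR _ _ _ _ SD (is_series_scalR g _ _ SU)) as S.
  assert (SG : is_series (fun n => g * x ^ n) (g / (1 - x))).
  { apply (is_series_scalR g (fun n => x ^ n)). apply is_series_geom; auto. }
  change (scal x (PSeries (PS_derive (uc g)) x)) with (x * PSeries (PS_derive (uc g)) x) in S.
  rewrite <- (is_series_unique _ _ SG). rewrite <- (is_series_unique _ _ S).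
  apply Series_ext. intro n. destruct n.
  - cbv beta. change (PS_incr_1 (PS_derive (uc g)) 0) with 0. unfold uc. simpl. field. lra.
  - simpl. unfold PS_derive, uc. rewrite !S_INR. field. pose proof (pos_INR n). lra.
Qed.

Lemma xi_deriv z : z < 1 -> is_derive (xi q) z ((q - 1) / (1 - z) ^ 2).
Proof.
  intro Hz. unfold xi. auto_derive. lra. field. lra.
Qed.

Lemma Phi_deriv z : z < 1 -> Rabs (xi q z) < 1 ->
  exists d : R, is_derive (Phi g q th) z d /\
    (q - z) * (1 - z) * d - g * (1 - q) * Phi g q th z = th * (1 - z).
Proof.
  intros Hz Hx.
  assert (H1 : Rbar_lt (Rabs (xi q z)) (CV_radius (uc g))) by (eapply rbar_lt_of_le; [apply rad_uc | auto]).
  pose proof (is_derive_PSeries _ _ H1) as HU.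
  pose proof (is_derive_compR _ _ _ _ _ HU (xi_deriv z Hz)) as HC.
  pose proof (is_derive_scal _ _ (- (th / g)) _ HC) as HP.
  eexists. split. exact HP.
  pose proof (U_id _ Hx) as Hid. unfold Phi.
  set (D := PSeries (PS_derive (uc g)) (xi q z)) in *.
  set (U := PSeries (uc g) (xi q z)) in *.
  assert (E1 : (q - z) * (1 - z) * (- (th / g) * ((q - 1) / (1 - z) ^ 2 * D)) =
     th / g * (1 - q) * (xi q z * D)) by (unfold xi; field; split; lra).
  rewrite E1. replace (xi q z * D) with (g / (1 - xi q z) - g * U) by lra.
  assert (1 - xi q z <> 0) by (unfold xi; intro E; field_simplify in E; [|lra];
    apply Rmult_integral in E; destruct E as [E|E]; [lra|]; apply Rinv_neq_0_compat in E; auto; lra).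
  unfold xi in *. field. repeat split; lra.
Qed.

Definition e2 (n : nat) : R := match n with O => th | S O => - th | _ => 0 end.

Lemma e2_series z : is_series (fun n => e2 n * z ^ n) (th - th * z).
Proof.
  apply is_series_Reals. intros eps He. exists 1%nat. intros n Hn.
  assert (E : forall k, sum_f_R0 (fun n => e2 n * z ^ n) (S k) = th - th * z).
  { induction k. simpl. ring. rewrite tech5, IHk. simpl. ring. }
  destruct n. lia. rewrite E. unfold R_dist. rewrite Rminus_eq_0, Rabs_R0. lra.
Qed.

Lemma L_ode z : Rabs z < 1 ->
  (q - z) * (1 - z) * PSeries (PS_derive (qcoef th g q)) z - g * (1 - q) * PSeries (qcoef th g q) z
  = th * (1 - z).
Proof.
  intro Hz. set (Q := qcoef th g q). set (d := PS_derive Q).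
  assert (H1 : Rbar_lt (Rabs z) (CV_radius Q)) by (eapply rbar_lt_of_le; [apply rad_Qc | auto]).
  assert (H2 : Rbar_lt (Rabs z) (CV_radius d)) by (unfold d; rewrite CV_radius_derive; auto).
  pose proof (pseries_is _ _ H1) as SL. pose proof (pseries_is _ _ H2) as SD.
  pose proof SD as SD1. apply is_pseries_R, is_pseries_incr_1, is_pseries_R in SD1.
  pose proof SD1 as SD2. apply is_pseries_R, is_pseries_incr_1, is_pseries_R in SD2.
  change (scal z (PSeries d z)) with (z * PSeries d z) in SD1, SD2.
  change (scal z (z * PSeries d z)) with (z * (z * PSeries d z)) in SD2.
  pose proof (is_series_plusR _ _ _ _ (is_series_scalR q _ _ SD) (is_series_scalR (-(1+q)) _ _ SD1)) as S1.
  pose proof (is_series_plusR _ _ _ _ S1 SD2) as S2.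
  pose proof (is_series_plusR _ _ _ _ S2 (is_series_scalR (- (g * (1 - q))) _ _ SL)) as S3.
  pose proof (e2_series z) as S4.
  apply is_series_unique in S3. apply is_series_unique in S4.
  rewrite (Series_ext _ (fun n => e2 n * z ^ n)) in S3.
  - rewrite S3 in S4. unfold d in S4. replace (th * (1 - z)) with (th - th * z) by ring. rewrite <- S4. unfold d. ring.
  - intro n. cbv beta. destruct n.
    + change (PS_incr_1 d 0) with 0. change (PS_incr_1 (PS_incr_1 d) 0) with 0.
      pose proof (rec_0 g q th Hg Hq Ht) as R. fold Q in R.
      change (e2 O) with th. change (d O) with (INR 1 * Q 1%nat). rewrite <- R. ring.
    + pose proof (rec_S g q th Hg Hq Ht n) as R. fold Q in R.
      change (PS_incr_1 d (S n)) with (d n).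
      change (PS_incr_1 (PS_incr_1 d) (S n)) with (PS_incr_1 d n).
      assert (E : PS_incr_1 d n = INR n * Q n).
      { destruct n. change (PS_incr_1 d 0) with 0. simpl; ring. reflexivity. }
      rewrite E. unfold d, PS_derive.
      assert (E2 : e2 (S n) = match n with O => - th | S _ => 0 end) by (destruct n; reflexivity).
      rewrite E2, <- R. ring.
Qed.
End Anal.

Section Eq.
Variables (g q th : R).
Hypothesis (Hg : 0 < g) (Hq : 0 <= q < 1) (Ht : 0 < th).

Lemma xi_small z : -1/2 < z < 1/2 -> Rabs (xi q z) < 1.
Proof.
  intro Hz. unfold xi. apply Rabs_def1.
  - apply Rmult_lt_reg_r with (1 - z). lra. field_simplify; lra.
  - apply Rmult_lt_reg_r with (1 - z). lra. field_simplify; lra.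
Qed.

Lemma D_deriv z : -1/2 < z < 1/2 ->
  exists dD : R, is_derive (fun t => Phi g q th t - PSeries (qcoef th g q) t) z dD /\
   (q - z) * (1 - z) * dD = g * (1 - q) * (Phi g q th z - PSeries (qcoef th g q) z).
Proof.
  intro Hz.
  destruct (Phi_deriv g q th Hg Hq z ltac:(lra) (xi_small z Hz)) as [d [Hd Ed]].
  assert (Hr : Rbar_lt (Rabs z) (CV_radius (qcoef th g q))).
  { eapply rbar_lt_of_le. apply rad_Qc; auto. apply Rabs_def1; lra. }
  pose proof (is_derive_PSeries _ _ Hr) as HL.
  pose proof (L_ode g q th Hg Hq Ht z ltac:(apply Rabs_def1; lra)) as EL.
  eexists. split. apply (is_derive_minusR _ _ _ _ _ Hd HL).
  lra.
Qed.

Lemma D_zero0 : Phi g q th 0 - PSeries (qcoef th g q) 0 = 0.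
Proof.
  rewrite PSeries_0. unfold Phi. simpl qcoef.
  replace (xi q 0) with q by (unfold xi; field).
  rewrite hyp1_eq by (auto; rewrite Rabs_pos_eq; lra). ring.
Qed.

Lemma sign_choice : exists s sg, 0 < s <= 1/2 /\ forall z, 0 < z < s -> 0 < sg * xi q z < 1.
Proof.
  destruct (Rlt_le_dec 0 q) as [Hq0|Hq0].
  - exists (Rmin (1/2) q), 1. split. split. apply Rmin_glb_lt; lra. apply Rmin_l.
    intros z Hz. pose proof (Rmin_r (1/2) q). pose proof (Rmin_l (1/2) q).
    unfold xi. rewrite Rmult_1_l. split.
    apply Rdiv_lt_0_compat; lra.
    apply Rmult_lt_reg_r with (1 - z). lra. field_simplify; lra.
  - exists (1/2), (-1). split. lra. intros z Hz. assert (q = 0) by lra. subst.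
    unfold xi. split.
    + replace (-1 * ((0 - z) / (1 - z))) with (z / (1 - z)) by (field; lra). apply Rdiv_lt_0_compat; lra.
    + replace (-1 * ((0 - z) / (1 - z))) with (z / (1 - z)) by (field; lra).
      apply Rmult_lt_reg_r with (1 - z). lra. field_simplify; lra.
Qed.

Lemma Phi_eq_L : exists s, 0 < s <= 1/2 /\ forall z, 0 < z < s -> Phi g q th z = PSeries (qcoef th g q) z.
Proof.
  destruct sign_choice as [s [sg [Hs Hsg]]].
  exists s. split; auto.
  set (D := fun t => Phi g q th t - PSeries (qcoef th g q) t).
  set (w := fun t => exp (g * ln (sg * ((q - t) / (1 - t))))).
  set (K := fun t => D t * w t).
  assert (Hw : forall z, 0 < z < s -> 0 < w z <= 1).
  { intros z Hz. specialize (Hsg z Hz). unfold xi in Hsg. unfold w. split. apply exp_pos.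
    assert (ln (sg * ((q - z) / (1 - z))) < 0) by (rewrite <- ln_1; apply ln_increasing; lra).
    apply Rlt_le. apply Rlt_le_trans with (exp 0); [apply exp_increasing; nra | rewrite exp_0; lra]. }
  assert (HK : forall z, 0 < z < s -> is_derive K z 0).
  { intros z Hz. pose proof (Hsg z Hz) as Hx. unfold xi in Hx.
    assert (Hqz : q - z <> 0) by (intro E; rewrite E in Hx; unfold Rdiv in Hx; lra).
    destruct (D_deriv z ltac:(lra)) as [dD [HdD EdD]].
    assert (Hdw : is_derive w z (w z * (g * ((q - 1) / ((1 - z) * (q - z)))))).
    { assert (Hsg0 : sg <> 0) by (intro E; rewrite E in Hx; lra).
      unfold w. auto_derive. split; [lra | split; [exact (proj1 Hx) | exact I]].
      change (q + - z) with (q - z). change (1 + - z) with (1 - z).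
      match goal with |- ?a = ?b => change (@eq R a b) end.
      change RinvImpl.Rinv with Rinv. set (EE := exp (g * ln (sg * ((q - z) / (1 - z))))). change (exp (g * ln (sg * ((q - z) * / (1 - z))))) with EE. field. repeat split; try lra. }
    pose proof (is_derive_multR _ _ _ _ _ HdD Hdw) as HM.
    replace 0 with (dD * w z + D z * (w z * (g * ((q - 1) / ((1 - z) * (q - z)))))). exact HM.
    replace dD with (g * (1 - q) * D z / ((q - z) * (1 - z))).
    field. split; lra.
    apply Rmult_eq_reg_l with ((q - z) * (1 - z)). rewrite EdD. unfold D. match goal with |- ?a = ?b => change (@eq R a b) end. field. split; lra.
    apply Rmult_integral_contrapositive; split; lra. }
  assert (HD0 : continuity_pt D 0).
  { destruct (D_deriv 0 ltac:(lra)) as [dD [HdD _]]. eapply derive_cont. exact HdD. }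
  assert (HKz : forall z, 0 < z < s -> K z = 0).
  { intros z Hz. apply NNPP. intro Hc.
    set (c := K z) in *.
    assert (Hcp : 0 < Rabs c) by (apply Rabs_pos_lt; auto).
    destruct (HD0 (Rabs c) Hcp) as [del [Hdel Hd]].
    set (y := Rmin del s / 2).
    assert (Hm : 0 < Rmin del s) by (apply Rmin_glb_lt; lra).
    assert (Hy : 0 < y < s) by (unfold y; pose proof (Rmin_r del s); split; lra).
    assert (Hy2 : y < del) by (unfold y; pose proof (Rmin_l del s); lra).
    specialize (Hd y). simpl in Hd. unfold R_dist in Hd. rewrite Rminus_0_r in Hd.
    assert (HDz : D 0 = 0) by apply D_zero0. rewrite HDz, Rminus_0_r in Hd.
    assert (Hd' : Rabs (D y) < Rabs c).
    { apply Hd. split. split; [constructor|lra]. rewrite Rabs_pos_eq; lra. }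
    assert (Kc : K y = c) by (unfold c; apply (const_of_deriv K 0 s HK); auto).
    unfold K in Kc. destruct (Hw y Hy) as [Hw1 Hw2].
    rewrite <- Kc in Hcp, Hd'. rewrite Rabs_mult, (Rabs_pos_eq (w y)) in Hd' by lra.
    pose proof (Rabs_pos (D y)). nra. }
  intros z Hz. specialize (HKz z Hz). unfold K in HKz. destruct (Hw z Hz).
  apply Rmult_integral in HKz. destruct HKz as [E|E]; [|lra]. unfold D in E. lra.
Qed.
End Eq.

Lemma sum_mono (a : nat -> R) N n : (forall k, 0 <= a k) -> (N <= n)%nat -> sum_f_R0 a N <= sum_f_R0 a n.
Proof.
  intros Ha Hn. induction n. assert (N = O) by lia. subst; lra.
  destruct (Nat.eq_dec N (S n)). subst; lra. simpl. specialize (IHn ltac:(lia)). pose proof (Ha (S n)). lra.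
Qed.

Lemma partial_le (a : nat -> R) l : infinite_sum a l -> (forall n, 0 <= a n) -> forall N, sum_f_R0 a N <= l.
Proof.
  intros Hl Ha N. apply Rnot_lt_le. intro Hc.
  destruct (Hl (sum_f_R0 a N - l) ltac:(lra)) as [M HM].
  specialize (HM (max M N) ltac:(lia)). unfold R_dist in HM.
  pose proof (sum_mono a N (max M N) Ha ltac:(lia)).
  rewrite Rabs_pos_eq in HM; lra.
Qed.

Lemma lim_nonneg (a : nat -> R) l : infinite_sum a l -> (forall n, 0 <= a n) -> 0 <= l.
Proof.
  intros Hl Ha. apply Rnot_lt_le. intro Hc.
  destruct (Hl (- l) ltac:(lra)) as [M HM]. specialize (HM M ltac:(lia)). unfold R_dist in HM.
  pose proof (cond_pos_sum a M Ha). rewrite Rabs_pos_eq in HM; lra.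
Qed.

Lemma pseries_ge0 (a : nat -> R) z : (forall n, 0 <= a n) -> 0 <= z -> Rbar_lt (Rabs z) (CV_radius a) ->
  a O <= PSeries a z.
Proof.
  intros Ha Hz Hr. rewrite (PSeries_decr_1 a z (CV_radius_inside _ _ Hr)).
  assert (Hr' : Rbar_lt (Rabs z) (CV_radius (PS_decr_1 a))) by (rewrite CV_radius_decr_1; auto).
  pose proof (pseries_is _ _ Hr') as H. apply is_series_Reals in H.
  apply lim_nonneg in H. pose proof (Rmult_le_pos _ _ Hz H). lra.
  intro n. apply Rmult_le_pos. apply Ha. apply pow_le; auto.
Qed.

Lemma ln_0 : ln 0 = 0.
Proof. unfold ln. destruct (Rlt_dec 0 0) as [r|r]; [exfalso; exact (Rlt_irrefl 0 r) | reflexivity]. Qed.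

Theorem mainTheorem10 (delta alpha beta theta : R) (p : nat -> R)
  (Hdelta : 0 < delta) (Hab : beta < alpha) (Hb : 0 <= beta) (Htheta : 0 < theta)
  (Hp_nonneg : forall n, 0 <= p n)
  (Hp_sum : infinite_sum p 1)
  (Hlaw : forall z, 0 <= z < 1 -> -1 < xi (beta / alpha) z ->
     ln (pgf p z) = - (theta / (delta / (alpha - beta)))
         * hyp2F1 1 (delta / (alpha - beta)) (1 + delta / (alpha - beta))
                  (xi (beta / alpha) z)) :
  let gamma := delta / (alpha - beta) in
  let q := beta / alpha in
  (exists r, 0 < r /\ forall z, Rabs z < r ->
     infinite_sum (fun k => qcoef theta gamma q k * z ^ k) (ln (pgf p z)))
  /\ p 0%nat = exp (qcoef theta gamma q 0)
  /\ (forall n : nat, (1 <= n)%nat ->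
        p n = / INR n * sum_f_R0 (fun k => INR (n - k) * qcoef theta gamma q (n - k) * p k)
                                 (n - 1)).
Proof.
  intros g q.
  change (delta / (alpha - beta)) with g in Hlaw. change (beta / alpha) with q in Hlaw.
  assert (Hg : 0 < g) by (unfold g; apply Rdiv_lt_0_compat; lra).
  assert (Hq : 0 <= q < 1).
  { unfold q. split. apply Rmult_le_pos; [lra | apply Rlt_le, Rinv_0_lt_compat; lra].
    apply Rmult_lt_reg_r with alpha. lra. field_simplify; lra. }
  clearbody g q.
  set (Q := qcoef theta g q).
  assert (Hp1 : forall n, p n <= 1).
  { intro n. pose proof (term_le_sum p n n Hp_nonneg (le_n n)). pose proof (partial_le p 1 Hp_sum Hp_nonneg n). lra. }
  assert (Hrp : Rbar_le 1 (CV_radius p)).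
  { apply radius_ge1 with 1. intro n. rewrite Rabs_pos_eq; auto. }
  assert (HrQ : Rbar_le 1 (CV_radius Q)) by (apply rad_Qc; auto).
  assert (Hpgf : forall z, Rabs z < 1 -> pgf p z = PSeries p z).
  { intros z Hz. unfold pgf. apply series_sum_eq. apply is_series_Reals. apply pseries_is.
    eapply rbar_lt_of_le; eauto. }
  assert (HG0 : forall z, 0 <= z < 1 -> p O <= PSeries p z).
  { intros z Hz. apply pseries_ge0; [auto | lra | eapply rbar_lt_of_le; eauto; rewrite Rabs_pos_eq; lra]. }
  assert (HQ0 : Q O = - (theta / g) * PSeries (uc g) q).
  { unfold Q. simpl qcoef. rewrite hyp1_eq; auto. rewrite Rabs_pos_eq; lra. }
  assert (HL0 : ln (p O) = Q O).
  { pose proof (Hlaw 0 ltac:(lra) ltac:(unfold xi; replace ((q - 0) / (1 - 0)) with q by field; lra)) as H.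
    rewrite Hpgf in H by (rewrite Rabs_R0; lra). rewrite PSeries_0 in H.
    rewrite H. unfold Q. simpl qcoef. f_equal. f_equal. unfold xi. field. }
  assert (Hp0 : 0 < p O).
  { destruct (Hp_nonneg O) as [H|H]; auto. exfalso. rewrite <- H, ln_0 in HL0.
    assert (1 <= PSeries (uc g) q).
    { replace 1 with (uc g O) by (unfold uc; simpl; field; lra). apply pseries_ge0.
      intro n. unfold uc. apply Rlt_le, Rdiv_lt_0_compat; auto. pose proof (pos_INR n); lra. lra.
      eapply rbar_lt_of_le. apply rad_uc; auto. rewrite Rabs_pos_eq; lra. }
    rewrite HQ0 in HL0. assert (0 < theta / g) by (apply Rdiv_lt_0_compat; lra). nra. }
  assert (Claim2 : p O = exp (Q O)) by (rewrite <- HL0, exp_ln; auto).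
  destruct (Phi_eq_L g q theta Hg Hq Htheta) as [s [Hs HPhi]].
  assert (HGe : forall z, 0 < z < s -> PSeries p z = exp (PSeries Q z)).
  { intros z Hz. assert (Hx : Rabs (xi q z) < 1) by (apply xi_small; lra).
    pose proof (Hlaw z ltac:(lra) ltac:(apply Rabs_def2 in Hx; lra)) as H.
    rewrite Hpgf in H by (rewrite Rabs_pos_eq; lra).
    rewrite hyp1_eq in H by auto. fold (Phi g q theta z) in H. rewrite HPhi in H by auto. fold Q in H.
    rewrite <- H, exp_ln; auto. pose proof (HG0 z ltac:(lra)). lra. }
  set (dQ := PS_derive Q).
  assert (HrdQ : Rbar_le 1 (CV_radius dQ)) by (unfold dQ; rewrite CV_radius_derive; auto).
  assert (Hcoef : forall n, PS_derive p n = PS_mult p dQ n).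
  { intro n. apply coef_unique with s. lra.
    - rewrite CV_radius_derive. eapply Rbar_le_trans; [|exact Hrp]. simpl; lra.
    - replace (Finite s) with (Finite (Rabs s)) by (rewrite Rabs_pos_eq; auto; lra).
      apply pseries_ex_radius. apply ex_pseries_mult; eapply rbar_lt_of_le; eauto; rewrite Rabs_pos_eq; lra.
    - intros z Hz.
      assert (Hzr : Rabs z < 1) by (rewrite Rabs_pos_eq; lra).
      assert (R1 : Rbar_lt (Rabs z) (CV_radius p)) by (eapply rbar_lt_of_le; eauto).
      assert (R2 : Rbar_lt (Rabs z) (CV_radius Q)) by (eapply rbar_lt_of_le; eauto).
      assert (R3 : Rbar_lt (Rabs z) (CV_radius dQ)) by (eapply rbar_lt_of_le; eauto).
      rewrite PSeries_mult by auto.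
      pose proof (is_derive_PSeries _ _ R1) as D1.
      pose proof (is_derive_compR exp (PSeries Q) z _ _ (is_derive_exp _) (is_derive_PSeries _ _ R2)) as D2.
      assert (Hloc : locally z (fun t => exp (PSeries Q t) = PSeries p t)).
      { assert (HL := my_loc_interval 0 s z Hz). revert HL. apply filter_imp. intros t Ht. rewrite HGe; auto. }
      pose proof (is_derive_ext_loc _ _ _ _ Hloc D2) as D3.
      apply is_derive_unique in D1. apply is_derive_unique in D3. rewrite D1 in D3. rewrite D3.
      rewrite <- HGe by auto. unfold dQ. ring. }
  split; [|split].
  -
    exists (1/2). split. lra. intros z Hz.
    set (H := fun t => PSeries p t * exp (-1 * PSeries Q t)).
    assert (HH : forall t, -1/2 < t < 1/2 -> is_derive H t 0).
    { intros t Ht. assert (Htr : Rabs t < 1) by (apply Rabs_def1; lra).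
      assert (R1 : Rbar_lt (Rabs t) (CV_radius p)) by (eapply rbar_lt_of_le; eauto).
      assert (R2 : Rbar_lt (Rabs t) (CV_radius Q)) by (eapply rbar_lt_of_le; eauto).
      assert (R3 : Rbar_lt (Rabs t) (CV_radius dQ)) by (eapply rbar_lt_of_le; eauto).
      pose proof (is_derive_PSeries _ _ R1) as D1.
      pose proof (is_derive_scal _ _ (-1) _ (is_derive_PSeries _ _ R2)) as D2.
      pose proof (is_derive_compR exp _ t _ _ (is_derive_exp _) D2) as D3.
      pose proof (is_derive_multR _ _ _ _ _ D1 D3) as D4.
      replace 0 with (PSeries (PS_derive p) t * exp (-1 * PSeries Q t) +
          PSeries p t * (-1 * PSeries (PS_derive Q) t * exp (-1 * PSeries Q t))). exact D4.
      erewrite PSeries_ext; [|exact Hcoef]. rewrite PSeries_mult by auto. unfold dQ. ring. }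
    assert (HHc : H z = H 0) by (apply (const_of_deriv H (-1/2) (1/2) HH); apply Rabs_def2 in Hz; lra).
    unfold H in HHc. rewrite !PSeries_0 in HHc. fold Q in HHc.
    rewrite Claim2, <- exp_plus in HHc. replace (Q O + -1 * Q O) with 0 in HHc by ring.
    rewrite exp_0 in HHc.
    assert (HGz : PSeries p z = exp (PSeries Q z)).
    { apply Rmult_eq_reg_r with (exp (-1 * PSeries Q z)). rewrite HHc, <- exp_plus.
      replace (PSeries Q z + -1 * PSeries Q z) with 0 by ring. rewrite exp_0; auto.
      pose proof (exp_pos (-1 * PSeries Q z)); lra. }
    rewrite Hpgf by lra. rewrite HGz, ln_exp.
    apply is_series_Reals. apply pseries_is. eapply rbar_lt_of_le; eauto. lra.
  - exact Claim2.
  - intros n Hn. destruct n. lia.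
    specialize (Hcoef n). unfold PS_derive, PS_mult, dQ, PS_derive in Hcoef.
    replace (S n - 1)%nat with n by lia.
    rewrite (sum_eq _ (fun k => p k * (INR (S (n - k)) * Q (S (n - k))))).
    + rewrite <- Hcoef. field. apply not_0_INR. lia.
    + intros k Hk. replace (S n - k)%nat with (S (n - k)) by lia. ring.
Qed.
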